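(* Let $M>0$, $\beta^*>0$, and let $g$ be the log-normal density $g(t)=\frac{1}{t\sigma\sqrt{2\pi}}\exp\!\big(-\frac{(\ln t-\mu)^2}{2\sigma^2}\big)$ for $t>0$, $g(t)=0$ for $t\le0$ ($\mu\in\mathbb{R}$, $\sigma>0$). Let $I$ be the unique $C^1$ solution on $[0,\infty)$ of \[ I'(t)=\beta^*(M-I(t))\Big(I(t)-\int_0^t g(t-s)I(s)\,ds\Big),\qquad I(0)=I_0\in[0,M]. \] Then $\lim_{t\to\infty}I'(t)=0$. *)

(* Defs.v *)
From Stdlib Require Import Reals.
From Coquelicot Require Import Coquelicot.
Open Scope R_scope.

Definition lognormal (mu sigma : R) (t : R) : R :=
  if Rle_dec t 0 then 0
  else / (t * sigma * sqrt (2 * PI)) * exp (- (ln t - mu) ^ 2 / (2 * sigma ^ 2)).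

Definition rhs (beta M mu sigma : R) (I : R -> R) (t : R) : R :=
  beta * (M - I t) * (I t - RInt (fun s => lognormal mu sigma (t - s) * I s) 0 t).

(* Main.v *)
Require Import Defs.
From Stdlib Require Import Reals Lra Classical.
From Coquelicot Require Import Coquelicot.
Open Scope R_scope.


Ltac rR := match goal with |- ?a = ?b => change (a = b :> R) end.

Lemma exd_cont (f:R->R) x : ex_derive f x -> continuous f x.
Proof. intro H. exact (@ex_derive_continuous R_AbsRing R_NormedModule f x H). Qed.

Lemma chasles (f:R->R) a b c : ex_RInt f a b -> ex_RInt f b c -> RInt f a b + RInt f b c = RInt f a c.
Proof. intros; apply (RInt_Chasles (V:=R_CompleteNormedModule)); auto. Qed.
Lemma rswap (f:R->R) a b : ex_RInt f a b -> RInt f b a = - RInt f a b.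
Proof. intros H. rewrite <- (opp_RInt_swap (V:=R_CompleteNormedModule)); auto. Qed.
Lemma exRI_cont (f:R->R) a b : (forall z, Rmin a b <= z <= Rmax a b -> continuous f z) -> ex_RInt f a b.
Proof. apply (@ex_RInt_continuous R_CompleteNormedModule). Qed.

Lemma RInt_sc (f:R->R) a b c : ex_RInt f a b -> RInt (fun x => c * f x) a b = c * RInt f a b.
Proof. intros H. exact (RInt_scal (V:=R_CompleteNormedModule) f a b c H). Qed.
Lemma RInt_lin (f:R->R) u v a b : ex_RInt f (u*a+v) (u*b+v) ->
  RInt (fun y => u * f (u*y+v)) a b = RInt f (u*a+v) (u*b+v).
Proof. exact (RInt_comp_lin (V:=R_CompleteNormedModule) f u v a b). Qed.

Definition gf (t:R) := exp (-(t^2)).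
Lemma gf_cont : forall x, continuous gf x.
Proof. intro x; apply exd_cont; unfold gf; auto_derive; auto. Qed.
Lemma ex_RInt_gf a b : ex_RInt gf a b.
Proof. apply (@ex_RInt_continuous R_CompleteNormedModule); intros; apply gf_cont. Qed.

Definition hf (x t : R) := exp (-(x^2)*(1+t^2)) / (1+t^2).
Lemma pos1t2 t : 0 < 1 + t^2.
Proof. nra. Qed.

Lemma Derive_hf x t : Derive (fun u => hf u t) x = -2 * x * exp(-(x^2)*(1+t^2)).
Proof.
  apply is_derive_unique; unfold hf; auto_derive.
  - trivial.
  - pose proof (pos1t2 t). simpl in *. set (e := exp _). field. lra.
Qed.

Lemma is_derive_val (f:R->R) x l l' : is_derive f x l -> l = l' -> is_derive f x l'.
Proof. intros H <-; exact H. Qed.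

Lemma cont_exp x : continuity_pt exp x.
Proof. apply derivable_continuous_pt; apply derivable_pt_exp. Qed.

Lemma H_deriv (x:R) : is_derive (fun x => RInt (fun t => hf x t) 0 1 + (RInt gf 0 x)^2) x 0.
Proof.
  assert (D1: is_derive (fun x => RInt (fun t => hf x t) 0 1) x (RInt (fun t => Derive (fun u => hf u t) x) 0 1)).
  { apply (is_derive_RInt_param hf 0 1 x).
    - apply filter_forall; intros y t _; unfold hf; auto_derive; pose proof (pos1t2 t); lra.
    - intros t _. apply continuity_2d_pt_ext with (f := fun u v => -2*u*exp(-(u*u*(1+v*v)))).
      + intros; rewrite Derive_hf. f_equal. f_equal. ring.
      + apply continuity_2d_pt_mult.
        * apply continuity_2d_pt_mult; [apply continuity_2d_pt_const | apply continuity_2d_pt_id1].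
        * apply continuity_1d_2d_pt_comp with (f:=exp) (g := fun u v => -(u*u*(1+v*v))).
          apply cont_exp.
          apply continuity_2d_pt_opp. apply continuity_2d_pt_mult.
          apply continuity_2d_pt_mult; apply continuity_2d_pt_id1.
          apply continuity_2d_pt_plus. apply continuity_2d_pt_const.
          apply continuity_2d_pt_mult; apply continuity_2d_pt_id2.
    - apply filter_forall; intros y. apply (@ex_RInt_continuous R_CompleteNormedModule).
      intros; apply exd_cont; unfold hf; auto_derive; pose proof (pos1t2 z); lra. }
  assert (E1: RInt (fun t => Derive (fun u => hf u t) x) 0 1 = -2*exp(-(x^2)) * RInt gf 0 x).
  { rewrite (RInt_ext _ (fun t => x * (-2*exp(-(x^2)) * gf (x*t+0)))).
    - transitivity (RInt (fun y => -2*exp(-(x^2)) * gf y) (x*0+0) (x*1+0)).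
      + apply (RInt_comp_lin (V:=R_CompleteNormedModule) (fun y => -2*exp(-(x^2)) * gf y) x 0 0 1).
        apply (@ex_RInt_continuous R_CompleteNormedModule).
        intros; apply exd_cont; unfold gf; auto_derive; auto.
      + replace (x*0+0) with 0 by ring. replace (x*1+0) with x by ring.
        apply (RInt_scal (V:=R_CompleteNormedModule) gf 0 x (-2*exp(-(x^2)))). apply ex_RInt_gf.
    - intros t _. rewrite Derive_hf. unfold gf.
      replace (- (x^2) * (1+t^2)) with (-(x^2) + -((x*t+0)^2)) by ring.
      rewrite exp_plus. match goal with |- ?a = ?b => change (a = b :> R) end. ring. }
  assert (D2: is_derive (fun x => (RInt gf 0 x)^2) x (INR 2 * gf x * (RInt gf 0 x)^ Init.Nat.pred 2)).
  { apply (is_derive_pow (fun x => RInt gf 0 x)).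
    apply (is_derive_RInt (V:=R_NormedModule) gf (fun b => RInt gf 0 b) 0 x).
    - apply filter_forall; intros; apply (RInt_correct (V:=R_CompleteNormedModule)); apply ex_RInt_gf.
    - apply gf_cont. }
  rewrite E1 in D1.
  pose proof (is_derive_plus (V:=R_NormedModule) _ _ x _ _ D1 D2) as D.
  eapply is_derive_val; [exact D|].
  match goal with |- plus ?a ?b = ?c => change (a + b = c :> R) end. unfold gf; simpl INR; simpl Init.Nat.pred. ring.
Qed.

Lemma H_const (x:R) : RInt (fun t => hf x t) 0 1 + (RInt gf 0 x)^2 = PI/4.
Proof.
  assert (E: forall y, RInt (fun t => hf y t) 0 1 + (RInt gf 0 y)^2 = RInt (fun t => hf 0 t) 0 1 + (RInt gf 0 0)^2).
  { intro y. destruct (MVT_gen (fun x => RInt (fun t => hf x t) 0 1 + (RInt gf 0 x)^2) 0 y (fun _ => 0)) as [c [_ Hc]].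
    - intros; apply H_deriv.
    - intros z _. apply continuity_pt_filterlim. apply (exd_cont (fun x => RInt (fun t => hf x t) 0 1 + (RInt gf 0 x)^2)). exists 0. apply (H_deriv z).
    - lra. }
  rewrite E. rewrite RInt_point. 
  rewrite (RInt_ext _ (fun t => / (1 + t^2))).
  - rewrite (is_RInt_unique (V:=R_CompleteNormedModule) _ 0 1 (minus (atan 1) (atan 0))).
    + rewrite atan_1, atan_0. unfold minus, plus, opp, zero; simpl. rR. field.
    + apply (is_RInt_derive (V:=R_CompleteNormedModule) atan).
      * intros; apply is_derive_Reals; apply derivable_pt_lim_atan.
      * intros. apply exd_cont. auto_derive. pose proof (pos1t2 x0); lra.
  - intros t _. unfold hf. replace (- 0^2 * (1+t^2)) with 0 by ring. rewrite exp_0. rR. field. pose proof (pos1t2 t); lra.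
Qed.

Lemma gauss_abs (x:R) : Rabs (RInt gf 0 x) <= sqrt PI / 2.
Proof.
  pose proof (H_const x) as H.
  assert (0 <= RInt (fun t => hf x t) 0 1).
  { apply RInt_ge_0. lra. apply exRI_cont; intros; apply exd_cont; unfold hf; auto_derive; pose proof (pos1t2 z); lra.
    intros t _. unfold hf. pose proof (pos1t2 t). pose proof (exp_pos (- x ^ 2 * (1 + t ^ 2))).
    apply Rlt_le, Rdiv_lt_0_compat; lra. }
  pose proof (sqrt_sqrt PI (Rlt_le _ _ PI_RGT_0)). pose proof (sqrt_pos PI).
  set (a := RInt gf 0 x) in *. set (s := sqrt PI) in *.
  apply Rabs_le; split; nra.
Qed.

Lemma gauss_le (a b:R) : RInt gf a b <= sqrt PI.
Proof.
  rewrite <- (chasles gf a 0 b) by apply ex_RInt_gf.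
  rewrite rswap by apply ex_RInt_gf.
  pose proof (gauss_abs a). pose proof (gauss_abs b).
  pose proof (Rle_abs (RInt gf 0 b)). pose proof (Rle_abs (- RInt gf 0 a)). rewrite Rabs_Ropp in *. lra.
Qed.


Lemma RInt_pt (f:R->R) a : RInt f a a = 0.
Proof. exact (RInt_point (V:=R_CompleteNormedModule) a f). Qed.

Lemma exp_mono x y : x <= y -> exp x <= exp y.
Proof. intros [H|H]. apply Rlt_le, exp_increasing; auto. subst; lra. Qed.

Lemma locally_R (x:R) (P:R->Prop) (e:R) : 0 < e -> (forall y, Rabs (y - x) < e -> P y) -> locally x P.
Proof. intros He H. exists (mkposreal e He). intros y Hy. apply H. exact Hy. Qed.

Section LN.
End LN.

Lemma ln_pos_eq mu sigma t : 0 < t ->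
  lognormal mu sigma t = / (t * sigma * sqrt (2 * PI)) * exp (- (ln t - mu) ^ 2 / (2 * sigma ^ 2)).
Proof. intros. unfold lognormal. destruct (Rle_dec t 0); [lra|auto]. Qed.

Lemma ln_neg_eq mu sigma t : t <= 0 -> lognormal mu sigma t = 0.
Proof. intros. unfold lognormal. destruct (Rle_dec t 0); [auto|lra]. Qed.

Lemma sq2pi : 0 < sqrt (2*PI).
Proof. apply sqrt_lt_R0. pose proof PI_RGT_0; lra. Qed.

Lemma ln_gt0 mu sigma t : 0 < sigma -> 0 < t -> 0 < lognormal mu sigma t.
Proof.
  intros Hs Ht. rewrite ln_pos_eq by auto. apply Rmult_lt_0_compat.
  apply Rinv_0_lt_compat. pose proof sq2pi. apply Rmult_lt_0_compat; [apply Rmult_lt_0_compat|]; auto.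
  apply exp_pos.
Qed.

Lemma ln_ge0 mu sigma t : 0 < sigma -> 0 <= lognormal mu sigma t.
Proof.
  intros Hs. destruct (Rle_dec t 0). rewrite ln_neg_eq; lra. apply Rlt_le, ln_gt0; lra.
Qed.

Definition Cg mu sigma := exp (2*sigma^2 - 2*mu) / (sigma * sqrt (2*PI)).

Lemma Cg_pos mu sigma : 0 < sigma -> 0 < Cg mu sigma.
Proof. intros. unfold Cg. pose proof sq2pi. pose proof (exp_pos (2*sigma^2 - 2*mu)).
  apply Rdiv_lt_0_compat; nra. Qed.

Lemma ln_bound mu sigma t : 0 < sigma -> 0 < t -> lognormal mu sigma t <= Cg mu sigma * t.
Proof.
  intros Hs Ht. rewrite ln_pos_eq by auto.
  assert (E: exp (- (ln t - mu) ^ 2 / (2 * sigma ^ 2)) <= t * t * exp (2*sigma^2 - 2*mu)).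
  { replace (t * t) with (exp (ln t + ln t)) by (rewrite exp_plus, exp_ln; auto). rewrite <- exp_plus. apply exp_mono.
    set (v := ln t). assert (S2: 0 < 2*sigma^2) by (simpl; nra).
    assert (0 <= (v - mu + 2*sigma^2)^2 / (2*sigma^2)).
    { apply Rmult_le_pos. apply pow2_ge_0. apply Rlt_le, Rinv_0_lt_compat; lra. }
    assert ((v - mu + 2*sigma^2)^2 / (2*sigma^2) = (v-mu)^2/(2*sigma^2) + 2*(v-mu) + 2*sigma^2).
    { field. lra. }
    unfold Rdiv in *. lra. }
  unfold Cg. pose proof sq2pi.
  assert (0 < t * sigma * sqrt (2*PI)) by (apply Rmult_lt_0_compat; nra).
  apply (Rmult_le_compat_l (/ (t * sigma * sqrt (2 * PI)))) in E.
  - eapply Rle_trans; [exact E|]. right. field. split; nra.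
  - apply Rlt_le, Rinv_0_lt_compat; auto.
Qed.

Lemma ln_cont_pt mu sigma x : 0 < sigma -> continuity_pt (lognormal mu sigma) x.
Proof.
  intros Hs. destruct (Rtotal_order x 0) as [Hx|[Hx|Hx]].
  - apply continuity_pt_filterlim.
    apply (continuous_ext_loc _ (fun _ => 0)).
    + apply (locally_R x _ (-x)); [lra|]. intros y Hy. rewrite ln_neg_eq; auto.
      apply Rabs_def2 in Hy. lra.
    + apply continuous_const.
  - subst. intros eps Heps. pose proof (Cg_pos mu sigma Hs).
    exists (eps / (Cg mu sigma + 1)). split.
    + apply Rdiv_lt_0_compat; lra.
    + intros y [_ Hy]. simpl in *. unfold R_dist in *. rewrite (ln_neg_eq mu sigma 0) by lra.
      rewrite Rminus_0_r in *. 
      destruct (Rle_dec y 0). rewrite ln_neg_eq by auto. rewrite Rabs_R0; lra.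
      pose proof (ln_bound mu sigma y Hs ltac:(lra)). pose proof (ln_ge0 mu sigma y Hs).
      rewrite Rabs_pos_eq by auto. rewrite Rabs_pos_eq in Hy by lra.
      assert (y * (Cg mu sigma + 1) < eps).
      { apply (Rmult_lt_compat_r (Cg mu sigma + 1)) in Hy; [|lra].
        unfold Rdiv in Hy. rewrite Rmult_assoc, Rinv_l in Hy by lra. lra. }
      nra.
  - apply continuity_pt_filterlim.
    apply (continuous_ext_loc _ (fun t => / (t * sigma * sqrt (2 * PI)) * exp (- (ln t - mu) ^ 2 / (2 * sigma ^ 2)))).
    + apply (locally_R x _ x); [lra|]. intros y Hy. rewrite ln_pos_eq; auto.
      apply Rabs_def2 in Hy. lra.
    + apply exd_cont. pose proof sq2pi. auto_derive. repeat split; try lra. 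
      apply Rgt_not_eq. apply Rmult_lt_0_compat; [apply Rmult_lt_0_compat|]; auto.
Qed.

Lemma ln_cont mu sigma x : 0 < sigma -> continuous (lognormal mu sigma) x.
Proof. intros; apply continuity_pt_filterlim, ln_cont_pt; auto. Qed.

Lemma ln_int_le1 mu sigma e t : 0 < sigma -> 0 < e -> 0 < t -> RInt (lognormal mu sigma) e t <= 1.
Proof.
  intros Hs He Ht.
  pose proof Rlt_sqrt2_0 as Q2. pose proof (sqrt_lt_R0 PI PI_RGT_0) as QP.
  set (k := sigma * sqrt 2). assert (Hk: 0 < k) by (unfold k; nra).
  set (phi := fun v => exp (mu + k * v)).
  set (a := (ln e - mu)/k). set (b := (ln t - mu)/k).
  assert (Pa: phi a = e).
  { unfold phi, a. replace (mu + k*((ln e - mu)/k)) with (ln e) by (field; lra). apply exp_ln; auto. }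
  assert (Pb: phi b = t).
  { unfold phi, b. replace (mu + k*((ln t - mu)/k)) with (ln t) by (field; lra). apply exp_ln; auto. }
  rewrite <- Pa, <- Pb.
  rewrite <- (RInt_comp (V:=R_CompleteNormedModule) (lognormal mu sigma) phi (fun v => k * phi v) a b).
  - rewrite (RInt_ext _ (fun y => / sqrt PI * gf y)).
    + transitivity (/ sqrt PI * RInt gf a b).
      * right. apply (RInt_scal (V:=R_CompleteNormedModule) gf a b (/sqrt PI) (ex_RInt_gf a b)).
      * pose proof (gauss_le a b). 
        apply (Rmult_le_compat_l (/ sqrt PI)) in H; [|apply Rlt_le, Rinv_0_lt_compat; auto].
        rewrite Rinv_l in H; lra.
    + intros y _. unfold scal; simpl; unfold mult; simpl.
      rewrite ln_pos_eq by (unfold phi; apply exp_pos). unfold phi. rewrite ln_exp.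
      replace ((mu + k*y - mu)^2) with (2*sigma^2 * y^2).
      2:{ unfold k. replace ((mu + sigma * sqrt 2 * y - mu) ^ 2) with (sigma^2 * y^2 * (sqrt 2 ^2)) by ring.
          rewrite pow2_sqrt by lra. ring. }
      replace (- (2*sigma^2*y^2) / (2*sigma^2)) with (-(y^2)) by (field; lra).
      rewrite sqrt_mult by (pose proof PI_RGT_0; lra). unfold gf, k.
      pose proof (exp_pos (mu + sigma * sqrt 2 * y)).
      rR. field. repeat split; lra.
  - intros; apply ln_cont; auto.
  - intros x _; split.
    + unfold phi. auto_derive; auto. ring.
    + apply exd_cont. unfold phi. auto_derive; auto.
Qed.

Lemma ln_exRI mu sigma a b : 0 < sigma -> ex_RInt (lognormal mu sigma) a b.
Proof. intros; apply exRI_cont; intros; apply ln_cont; auto. Qed.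

Lemma G_mono mu sigma t1 t2 : 0 < sigma -> t1 <= t2 ->
  RInt (lognormal mu sigma) 0 t1 <= RInt (lognormal mu sigma) 0 t2.
Proof.
  intros Hs H. rewrite <- (chasles _ 0 t1 t2) by (apply ln_exRI; auto).
  assert (0 <= RInt (lognormal mu sigma) t1 t2).
  { apply RInt_ge_0; auto. apply ln_exRI; auto. intros; apply ln_ge0; auto. }
  lra.
Qed.

Lemma G_le1 mu sigma t : 0 < sigma -> 0 <= t -> RInt (lognormal mu sigma) 0 t <= 1.
Proof.
  intros Hs Ht. destruct Ht as [Ht|Ht].
  2:{ subst. rewrite RInt_pt. lra. }
  destruct (Rle_dec (RInt (lognormal mu sigma) 0 t) 1) as [|Hn]; auto. exfalso.
  set (d := RInt (lognormal mu sigma) 0 t - 1). assert (Hd: 0 < d) by (unfold d; lra).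
  pose proof (Cg_pos mu sigma Hs) as HC. set (C := Cg mu sigma) in *.
  set (e := Rmin (t/2) (Rmin 1 (d/(2*(C+1))))).
  assert (He1: e <= t/2) by apply Rmin_l.
  assert (He2: e <= 1) by (eapply Rle_trans; [apply Rmin_r|apply Rmin_l]).
  assert (He3: e <= d/(2*(C+1))) by (eapply Rle_trans; [apply Rmin_r|apply Rmin_r]).
  assert (He0: 0 < e).
  { unfold e. apply Rmin_glb_lt; [lra|apply Rmin_glb_lt; [lra|apply Rdiv_lt_0_compat; lra]]. }
  pose proof (chasles (lognormal mu sigma) 0 e t ltac:(apply ln_exRI; auto) ltac:(apply ln_exRI; auto)) as Ech.
  pose proof (ln_int_le1 mu sigma e t Hs He0 Ht).
  assert (Rabs (RInt (lognormal mu sigma) 0 e) <= (e - 0) * (C * e)).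
  { apply abs_RInt_le_const. lra. apply ln_exRI; auto.
    intros s Hs'. rewrite Rabs_pos_eq by (apply ln_ge0; auto).
    destruct (Rle_dec s 0). rewrite ln_neg_eq by auto. apply Rmult_le_pos; lra.
    pose proof (ln_bound mu sigma s Hs ltac:(lra)) as HB. fold C in HB. nra. }
  pose proof (Rle_abs (RInt (lognormal mu sigma) 0 e)).
  assert (C * e * e <= (C+1) * e).
  { assert (C*e*e <= C*e*1) by (apply Rmult_le_compat_l; [apply Rmult_le_pos|]; lra). lra. }
  assert ((C+1) * e <= d/2).
  { apply (Rmult_le_compat_l (C+1)) in He3; [|lra].
    replace ((C+1) * (d / (2*(C+1)))) with (d/2) in He3 by (field; lra). lra. }
  replace ((e - 0) * (C * e)) with (C*e*e) in H0 by ring.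
  unfold d in *. lra.
Qed.

Lemma G_lt1 mu sigma t : 0 < sigma -> 0 <= t -> RInt (lognormal mu sigma) 0 t < 1.
Proof.
  intros Hs Ht. pose proof (G_le1 mu sigma (t+1) Hs ltac:(lra)).
  rewrite <- (chasles _ 0 t (t+1)) in H by (apply ln_exRI; auto).
  assert (0 < RInt (lognormal mu sigma) t (t+1)).
  { apply RInt_gt_0. lra. intros; apply ln_gt0; auto; lra. intros; apply ln_cont; auto. }
  lra.
Qed.


Lemma cont_eps f c eps : continuity_pt f c -> 0 < eps ->
  exists d, 0 < d /\ forall x, Rabs (x - c) < d -> Rabs (f x - f c) < eps.
Proof.
  intros Hc He. destruct (Hc eps He) as [d [Hd H]]. exists d. split; auto.
  intros x Hx. destruct (Req_dec x c) as [->|Hn].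
  - rewrite Rminus_eq_0, Rabs_R0; auto.
  - apply (H x). split. split; [exact I|auto]. exact Hx.
Qed.

Lemma mvt_open (f df : R -> R) a b : a < b ->
  (forall x, a < x < b -> is_derive f x (df x)) ->
  (forall x, a <= x <= b -> continuity_pt f x) ->
  exists c, a < c < b /\ f b - f a = df c * (b - a).
Proof.
  intros Hab Hd Hc.
  assert (pr1 : forall c, a < c < b -> derivable_pt f c).
  { intros c Hc'. exists (df c). apply is_derive_Reals. apply Hd; auto. }
  assert (pr2 : forall c, a < c < b -> derivable_pt id c).
  { intros c _. apply derivable_pt_id. }
  destruct (MVT f id a b pr1 pr2 Hab Hc) as [c [P E]].
  { intros; apply derivable_continuous_pt, derivable_pt_id. }
  exists c. split; auto.
  rewrite (derive_pt_eq_0 f c (df c) (pr1 c P)) in E.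
  2:{ apply is_derive_Reals, Hd; auto. }
  rewrite (derive_pt_eq_0 id c 1 (pr2 c P)) in E.
  2:{ apply derivable_pt_lim_id. }
  unfold id in E. lra.
Qed.

Lemma gronwall (w dw : R -> R) a0 T L : a0 <= T -> 0 <= L -> w a0 = 0 ->
  (forall x, a0 <= x <= T -> continuity_pt w x) ->
  (forall x, a0 < x < T -> is_derive w x (dw x)) ->
  (forall t B, a0 < t < T -> (forall s, a0 <= s <= t -> Rabs (w s) <= B) -> Rabs (dw t) <= L * B) ->
  forall t, a0 <= t <= T -> w t = 0.
Proof.
  intros HaT HL Hw0 Hc Hd Hb.
  set (tau := / (2 * (L + 1))).
  assert (Htau: 0 < tau) by (unfold tau; apply Rinv_0_lt_compat; lra).
  assert (HLt: L * tau <= /2).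
  { unfold tau. rewrite Rinv_mult. 
    assert (L * / (L+1) <= 1).
    { apply (Rmult_le_reg_r (L+1)); [lra|]. rewrite Rmult_assoc, Rinv_l by lra. lra. }
    replace (L * (/2 * /(L+1))) with (/2 * (L * /(L+1))) by ring. lra. }
  assert (P: forall n, forall t, a0 <= t <= T -> t <= a0 + INR n * tau -> w t = 0).
  { induction n as [|n IH].
    - intros t Ht Htn. simpl in Htn. rewrite Rmult_0_l, Rplus_0_r in Htn. replace t with a0 by lra. auto.
    - intros t Ht Htn. rewrite S_INR in Htn. replace (a0 + (INR n + 1) * tau) with (a0 + INR n * tau + tau) in Htn by ring.
      set (a := a0 + INR n * tau) in *.
      destruct (Rle_dec t a) as [Hta|Hta]. apply IH; auto.
      set (b := Rmin (a + tau) T).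
      assert (Hb1: b <= T) by apply Rmin_r.
      assert (Hb2: t <= b) by (apply Rmin_glb; lra).
      assert (Ha0: a0 <= a) by (unfold a; pose proof (pos_INR n); nra).
      destruct (continuity_ab_maj (fun x => Rabs (w x)) a0 b ltac:(lra)) as [c [Hcm Hcb]].
      { intros x Hx. apply (continuity_pt_comp w Rabs). apply Hc; lra. apply Rcontinuity_abs. }
      assert (Hwc: Rabs (w c) = 0).
      { destruct (Rle_dec c a) as [Hca|Hca].
        - rewrite IH; [apply Rabs_R0| lra | lra].
        - assert (Hwa: w a = 0) by (apply IH; lra).
          destruct (mvt_open w dw a c ltac:(lra)) as [xi [Hxi E]].
          + intros; apply Hd; lra.
          + intros; apply Hc; lra.
          + rewrite Hwa, Rminus_0_r in E.
            assert (Hdx: Rabs (dw xi) <= L * Rabs (w c)).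
            { apply Hb. lra. intros s Hs. apply Hcm. lra. }
            assert (Rabs (w c) <= L * Rabs (w c) * tau).
            { rewrite E at 1. rewrite Rabs_mult, (Rabs_pos_eq (c - a)) by lra.
              assert (c - a <= tau) by (assert (c <= a + tau) by (eapply Rle_trans; [apply Hcb|apply Rmin_l]); lra).
              pose proof (Rabs_pos (dw xi)). 
              apply Rle_trans with (Rabs (dw xi) * tau). apply Rmult_le_compat_l; lra.
              apply Rmult_le_compat_r; lra. }
            pose proof (Rabs_pos (w c)).
            assert (L * Rabs (w c) * tau = (L * tau) * Rabs (w c)) by ring.
            assert ((L * tau) * Rabs (w c) <= /2 * Rabs (w c)) by (apply Rmult_le_compat_r; lra).
            lra. }
      pose proof (Hcm t ltac:(lra)). pose proof (Rabs_pos (w t)).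
      apply Rabs_eq_0. lra.
  }
  intros t Ht.
  destruct (INR_archimed tau (t - a0) Htau) as [n Hn].
  apply (P n); auto. lra.
Qed.

Lemma last_zero (w:R->R) a b : a < b -> (forall x, a <= x <= b -> continuity_pt w x) ->
  w a <= 0 -> 0 < w b -> exists c, a <= c < b /\ w c = 0 /\ (forall x, c < x <= b -> 0 < w x).
Proof.
  intros Hab Hc Ha Hb.
  set (E := fun x => a <= x <= b /\ w x <= 0).
  destruct (completeness E) as [c [Hub Hlub]].
  { exists b. intros x [Hx _]. lra. }
  { exists a. split; [lra|auto]. }
  assert (Hac: a <= c) by (apply Hub; split; [lra|auto]).
  assert (Hcb: c <= b) by (apply Hlub; intros x [Hx _]; lra).
  assert (Hwc1: w c <= 0).
  { destruct (Rle_dec (w c) 0) as [|Hn]; auto. exfalso.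
    destruct (cont_eps w c (w c) (Hc c ltac:(lra)) ltac:(lra)) as [d [Hd Hdd]].
    assert (~ is_upper_bound E (c - d)).
    { intro Hu. pose proof (Hlub _ Hu). lra. }
    apply H. intros x Hx. destruct (Rle_dec x (c - d)) as [|Hxd]; auto. exfalso.
    destruct Hx as [Hx1 Hx2]. pose proof (Hub x (conj Hx1 Hx2)).
    assert (Rabs (x - c) < d) by (apply Rabs_def1; lra).
    pose proof (Hdd x H1). apply Rabs_def2 in H2. lra. }
  assert (Hcb': c < b) by (destruct (Req_dec c b); [subst; lra|lra]).
  assert (Hwc2: 0 <= w c).
  { destruct (Rle_dec 0 (w c)) as [|Hn]; auto. exfalso.
    destruct (cont_eps w c (- w c) (Hc c ltac:(lra)) ltac:(lra)) as [d [Hd Hdd]].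
    set (x := Rmin (c + d/2) b).
    assert (Hx1: x <= b) by apply Rmin_r.
    assert (Hx2: c < x) by (apply Rmin_glb_lt; lra).
    assert (Hx3: x <= c + d/2) by apply Rmin_l.
    assert (Rabs (x - c) < d) by (apply Rabs_def1; lra).
    pose proof (Hdd x H). apply Rabs_def2 in H0.
    assert (a <= x) by lra. assert (w x <= 0) by lra. pose proof (Hub x (conj (conj H1 Hx1) H2)). lra. }
  exists c. split; [lra|split; [lra|]].
  intros x Hx. destruct (Rle_dec (w x) 0) as [Hn|]; [|lra]. exfalso.
  assert (a <= x) by lra. pose proof (Hub x (conj (conj H (proj2 Hx)) Hn)). lra.
Qed.

Lemma mono_lim (f:R->R) B : (forall x y, 0 <= x <= y -> f x <= f y) -> (forall x, 0 <= x -> f x <= B) ->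
  exists l, (forall x, 0 <= x -> f x <= l) /\ forall e, 0 < e -> exists A, 0 <= A /\ forall x, A <= x -> l - e < f x.
Proof.
  intros Hm HB.
  set (E := fun y => exists x, 0 <= x /\ y = f x).
  destruct (completeness E) as [l [Hub Hlub]].
  { exists B. intros y [x [Hx ->]]. apply HB; auto. }
  { exists (f 0). exists 0. split; [lra|auto]. }
  exists l. split.
  - intros x Hx. apply Hub. exists x; auto.
  - intros e He. destruct (classic (exists A, 0 <= A /\ l - e < f A)) as [[A [HA HfA]]|Hn].
    + exists A. split; auto. intros x Hx. pose proof (Hm A x ltac:(lra)). lra.
    + exfalso. assert (is_upper_bound E (l - e)).
      { intros y [x [Hx ->]]. destruct (Rle_dec (f x) (l - e)); auto. exfalso. apply Hn. exists x. split; auto; lra. }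
      pose proof (Hlub _ H). lra.
Qed.

Lemma prod_close a b x y e : 0 <= e <= 1 -> Rabs (x - a) <= e -> Rabs (y - b) <= e ->
  Rabs (x*y - a*b) <= e * (Rabs a + Rabs b + 1).
Proof.
  intros He Hx Hy.
  replace (x*y - a*b) with ((x-a)*(y-b) + a*(y-b) + b*(x-a)) by ring.
  eapply Rle_trans. apply Rabs_triang. eapply Rle_trans. apply Rplus_le_compat_r. apply Rabs_triang.
  rewrite !Rabs_mult.
  pose proof (Rabs_pos (x - a)). pose proof (Rabs_pos (y - b)). pose proof (Rabs_pos a). pose proof (Rabs_pos b).
  assert (Rabs (x - a) * Rabs (y - b) <= e * 1) by (apply Rmult_le_compat; lra).
  assert (Rabs a * Rabs (y - b) <= Rabs a * e) by (apply Rmult_le_compat_l; lra).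
  assert (Rabs b * Rabs (x - a) <= Rabs b * e) by (apply Rmult_le_compat_l; lra).
  lra.
Qed.


Lemma cpt_of_continuous (f:R->R) x : continuous f x -> continuity_pt f x.
Proof. intros; apply continuity_pt_filterlim; auto. Qed.

Lemma continuous_of_cpt (f:R->R) x : continuity_pt f x -> continuous f x.
Proof. intros; apply continuity_pt_filterlim; auto. Qed.

Section Main.
Variables (M beta mu sigma : R) (I : R -> R).
Hypotheses (HM: 0 < M) (Hb: 0 < beta) (Hs: 0 < sigma) (HI0: 0 <= I 0 <= M)
  (Hc0: filterlim I (at_right 0) (locally (I 0)))
  (Hd: forall t, 0 < t -> is_derive I t (rhs beta M mu sigma I t)).

Local Notation g := (lognormal mu sigma).
Definition J s := I (Rmax 0 s).
Definition K t := RInt (fun s => g (t - s) * J s) 0 t.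
Definition G t := RInt g 0 t.
Definition F t := beta * (M - J t) * (J t - K t).

Lemma J_eq s : 0 <= s -> J s = I s.
Proof. intros; unfold J; rewrite Rmax_right; auto. Qed.

Lemma J_neg s : s <= 0 -> J s = I 0.
Proof. intros; unfold J; rewrite Rmax_left; auto. Qed.

Lemma J_cont x : continuity_pt J x.
Proof.
  destruct (Rtotal_order x 0) as [Hx|[Hx|Hx]].
  - apply cpt_of_continuous. apply (continuous_ext_loc _ (fun _ => I 0)).
    + apply (locally_R x _ (-x)); [lra|]. intros y Hy. apply Rabs_def2 in Hy. rewrite J_neg; auto; lra.
    + apply continuous_const.
  - subst. intros eps Heps.
    assert (Hl: locally (I 0) (fun y => Rabs (y - I 0) < eps)).
    { apply (locally_R _ _ eps); auto. }
    destruct (Hc0 _ Hl) as [d Hdd].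
    exists d. split; [apply cond_pos|].
    intros y [_ Hy]. simpl in Hy. unfold R_dist in Hy. simpl. unfold R_dist.
    rewrite (J_neg 0) by lra.
    destruct (Rle_dec y 0).
    + rewrite J_neg by auto. rewrite Rminus_eq_0, Rabs_R0; auto.
    + rewrite J_eq by lra. apply Hdd; [exact Hy|lra].
  - apply cpt_of_continuous. apply (continuous_ext_loc _ I).
    + apply (locally_R x _ x); [lra|]. intros y Hy. apply Rabs_def2 in Hy. rewrite J_eq; auto; lra.
    + apply exd_cont. eexists. apply (Hd x Hx).
Qed.

Lemma J_c x : continuous J x.
Proof. apply continuous_of_cpt, J_cont. Qed.

Lemma integrand_cont t s : continuous (fun s => g (t - s) * J s) s.
Proof.
  apply (continuous_mult (K:=R_AbsRing) (fun s => g (t - s)) J).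
  - apply (continuous_comp (fun s => t - s) g). 
    apply exd_cont. auto_derive. auto. apply ln_cont; auto.
  - apply J_c.
Qed.

Lemma K_ex t a b : ex_RInt (fun s => g (t - s) * J s) a b.
Proof. apply exRI_cont; intros; apply integrand_cont. Qed.

Lemma gts_ex t a b : ex_RInt (fun s => g (t - s)) a b.
Proof. apply exRI_cont; intros. apply (continuous_comp (fun s => t - s) g).
  apply exd_cont. auto_derive. auto. apply ln_cont; auto. Qed.

Lemma conv_g t a b : RInt (fun s => g (t - s)) a b = RInt g (t - b) (t - a).
Proof.
  pose proof (RInt_lin g (-1) t a b ltac:(apply ln_exRI; auto)) as E.
  rewrite (RInt_ext (fun y => -1 * g (-1 * y + t)) (fun y => -1 * g (t - y))) in E
    by (intros; f_equal; f_equal; ring).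
  rewrite RInt_sc in E by apply gts_ex.
  replace (-1 * a + t) with (t - a) in E by ring. replace (-1 * b + t) with (t - b) in E by ring.
  rewrite (rswap g (t - a) (t - b)) by (apply ln_exRI; auto). lra.
Qed.

Lemma rhs_eq t : 0 < t -> rhs beta M mu sigma I t = F t.
Proof.
  intros Ht. unfold rhs, F, K. rewrite J_eq by lra.
  rewrite (RInt_ext (fun s => g (t - s) * I s) (fun s => g (t - s) * J s)); auto.
  intros x Hx. rewrite Rmin_left in Hx by lra. rewrite J_eq; auto; lra.
Qed.

Lemma dJ t : 0 < t -> is_derive J t (F t).
Proof.
  intros Ht. rewrite <- rhs_eq by auto.
  apply (is_derive_ext_loc I J).
  - apply (locally_R t _ t); auto. intros y Hy. apply Rabs_def2 in Hy. rewrite J_eq; auto; lra.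
  - apply Hd; auto.
Qed.

Lemma G_conv t : RInt (fun s => g (t - s)) 0 t = G t.
Proof. rewrite conv_g. unfold G. f_equal; ring. Qed.

Lemma G_bnd t : 0 <= t -> 0 <= G t <= 1.
Proof.
  intros. unfold G. split. apply RInt_ge_0; auto. apply ln_exRI; auto. intros; apply ln_ge0; auto.
  apply G_le1; auto.
Qed.

Lemma K_upper t c : 0 <= t -> (forall s, 0 <= s <= t -> J s <= c) -> K t <= c * G t.
Proof.
  intros Ht H. rewrite <- G_conv. rewrite <- RInt_sc by apply gts_ex. unfold K.
  apply RInt_le; auto. apply K_ex. apply (ex_RInt_scal (V:=R_NormedModule) (fun x => g (t - x)) 0 t c), gts_ex.
  intros x Hx. rewrite Rmult_comm. apply Rmult_le_compat_r. apply ln_ge0; auto. apply H; lra.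
Qed.

Lemma K_lower t c : 0 <= t -> (forall s, 0 <= s <= t -> c <= J s) -> c * G t <= K t.
Proof.
  intros Ht H. rewrite <- G_conv. rewrite <- RInt_sc by apply gts_ex. unfold K.
  apply RInt_le; auto. 2: apply K_ex. apply (ex_RInt_scal (V:=R_NormedModule) (fun x => g (t - x)) 0 t c), gts_ex.
  intros x Hx. rewrite (Rmult_comm c). apply Rmult_le_compat_l. apply ln_ge0; auto. apply H; lra.
Qed.

Lemma K_abs t B : 0 <= t -> (forall s, 0 <= s <= t -> Rabs (J s) <= B) -> Rabs (K t) <= B.
Proof.
  intros Ht H. assert (HB: 0 <= B) by (eapply Rle_trans; [apply Rabs_pos|apply (H 0); lra]).
  pose proof (G_bnd t Ht).
  assert (K t <= B * G t) by (apply K_upper; auto; intros; eapply Rle_trans; [apply Rle_abs|auto]).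
  assert (-B * G t <= K t).
  { apply K_lower; auto. intros s Hs1. pose proof (H s Hs1) as H3. pose proof (Rle_abs (- J s)) as H4. rewrite Rabs_Ropp in H4. lra. }
  apply Rabs_le. split; nra.
Qed.

Lemma bnd T : 0 <= T -> exists B0, 0 <= B0 /\ forall s, 0 <= s <= T -> Rabs (J s) <= B0.
Proof.
  intros HT. destruct (continuity_ab_maj (fun x => Rabs (J x)) 0 T HT) as [c [Hc _]].
  { intros; apply (continuity_pt_comp J Rabs). apply J_cont. apply Rcontinuity_abs. }
  exists (Rabs (J c)). split; auto. apply Rabs_pos.
Qed.

Lemma J_le_M t : 0 <= t -> J t <= M.
Proof.
  intros Ht. destruct (Rle_dec (J t) M) as [|Hn]; auto. exfalso.
  destruct Ht as [Ht|Ht]; [|subst; rewrite J_eq in Hn; lra].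
  destruct (bnd t) as [B0 [HB0 HB]]; [lra|].
  destruct (last_zero (fun x => J x - M) 0 t Ht) as [c [Hc1 [Hc2 Hc3]]].
  { intros; apply continuity_pt_minus. apply J_cont. apply continuity_pt_const. intros u v; auto. }
  { rewrite J_eq; lra. }
  { lra. }
  assert (Z: (fun x => J x - M) t = 0).
  { apply (gronwall (fun x => J x - M) F c t (beta * (2 * B0))); auto; try lra.
    - apply Rmult_le_pos; lra.
    - intros; apply continuity_pt_minus. apply J_cont. apply continuity_pt_const. intros u v; auto.
    - intros x Hx. eapply is_derive_val.
      apply (is_derive_minus (V:=R_NormedModule) J (fun _ => M)). apply dJ; lra. apply (is_derive_const (K:=R_AbsRing)).
      unfold minus, plus, opp, zero; simpl. ring.
    - intros x B Hx HBx. unfold F.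
      assert (H1: Rabs (M - J x) <= B) by (rewrite Rabs_minus_sym; apply HBx; lra).
      assert (H2: Rabs (K x) <= B0) by (apply K_abs; [lra|intros; apply HB; lra]).
      assert (H3: Rabs (J x) <= B0) by (apply HB; lra).
      assert (H4: Rabs (J x - K x) <= 2 * B0).
      { eapply Rle_trans. apply Rabs_triang. rewrite Rabs_Ropp. lra. }
      rewrite !Rabs_mult, (Rabs_pos_eq beta) by lra.
      pose proof (Rabs_pos (M - J x)). pose proof (Rabs_pos (J x - K x)).
      replace (beta * (2 * B0) * B) with (beta * (B * (2 * B0))) by ring.
      rewrite Rmult_assoc. apply Rmult_le_compat_l; [lra|].
      apply Rmult_le_compat; auto. }
  simpl in Z. lra.
Qed.

Lemma zero_case : I 0 = 0 -> forall t, 0 <= t -> J t = 0.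
Proof.
  intros H0 t Ht. destruct (bnd t Ht) as [B0 [HB0 HB]].
  apply (gronwall J F 0 t (beta * (M + B0) * 2)); auto; try lra.
  - apply Rmult_le_pos; [apply Rmult_le_pos|]; lra.
  - rewrite J_eq; lra.
  - intros; apply J_cont.
  - intros; apply dJ; lra.
  - intros x B Hx HBx. unfold F.
    assert (H3: Rabs (J x) <= B0) by (apply HB; lra).
    assert (H1: Rabs (M - J x) <= M + B0).
    { eapply Rle_trans. apply Rabs_triang. rewrite Rabs_Ropp, Rabs_pos_eq; lra. }
    assert (H2: Rabs (K x) <= B) by (apply K_abs; [lra|intros; apply HBx; lra]).
    assert (H5: Rabs (J x) <= B) by (apply HBx; lra).
    assert (H4: Rabs (J x - K x) <= 2 * B).
    { eapply Rle_trans. apply Rabs_triang. rewrite Rabs_Ropp. lra. }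
    rewrite !Rabs_mult, (Rabs_pos_eq beta) by lra.
    pose proof (Rabs_pos (M - J x)). pose proof (Rabs_pos (J x - K x)).
    replace (beta * (M + B0) * 2 * B) with (beta * ((M + B0) * (2 * B))) by ring.
    rewrite Rmult_assoc. apply Rmult_le_compat_l; [lra|].
    apply Rmult_le_compat; auto.
Qed.

Lemma J_mono a b : 0 <= a <= b -> (forall t, a < t < b -> 0 <= F t) -> J a <= J b.
Proof.
  intros Hab HF. destruct (Req_dec a b) as [->|Hn]; [lra|].
  destruct (mvt_open J F a b ltac:(lra)) as [c [Hc E]].
  - intros; apply dJ; lra.
  - intros; apply J_cont.
  - pose proof (HF c Hc). assert (0 <= F c * (b - a)) by (apply Rmult_le_pos; lra). lra.
Qed.

Lemma F_nonneg : 0 < I 0 -> forall t, 0 < t -> 0 <= F t.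
Proof.
  intros HI t Ht.
  set (E := fun T => 0 <= T /\ forall t, 0 < t < T -> 0 <= F t).
  destruct (classic (bound E)) as [HB|HB].
  2:{ destruct (classic (is_upper_bound E t)) as [Hu|Hu].
      - exfalso. apply HB. exists t; auto.
      - apply not_all_ex_not in Hu. destruct Hu as [T HT].
        apply imply_to_and in HT. destruct HT as [[HT0 HT1] HT2].
        apply HT1. lra. }
  destruct (completeness E HB) as [Ts [Hub Hlub]].
  { exists 0. split; [lra|intros; lra]. }
  assert (HTs0: 0 <= Ts) by (apply Hub; split; [lra|intros; lra]).
  assert (Hin: forall t, 0 < t < Ts -> 0 <= F t).
  { intros u Hu. destruct (classic (is_upper_bound E u)) as [Hu'|Hu'].
    - pose proof (Hlub u Hu'). lra.
    - apply not_all_ex_not in Hu'. destruct Hu' as [T HT].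
      apply imply_to_and in HT. destruct HT as [[HT0 HT1] HT2].
      apply HT1. lra. }
  exfalso.
  set (p := J Ts).
  assert (Hp: 0 < p).
  { unfold p. pose proof (J_mono 0 Ts ltac:(lra) ltac:(intros; apply Hin; lra)). rewrite J_eq in H by lra. lra. }
  set (gam := 1 - G (Ts + 1)).
  assert (Hg: 0 < gam) by (unfold gam, G; pose proof (G_lt1 mu sigma (Ts+1) Hs ltac:(lra)); lra).
  assert (Hg1: gam <= 1) by (unfold gam; pose proof (G_bnd (Ts + 1) ltac:(lra)); lra).
  set (eta := p * gam / 4).
  assert (Heta: 0 < eta) by (unfold eta; apply Rmult_lt_0_compat; [apply Rmult_lt_0_compat|]; lra).
  destruct (cont_eps J Ts eta (J_cont Ts) Heta) as [d [Hd0 Hdd]].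
  set (d' := Rmin (d/2) 1).
  assert (Hd1: 0 < d') by (apply Rmin_glb_lt; lra).
  assert (Hd2: d' <= d/2) by apply Rmin_l.
  assert (Hd3: d' <= 1) by apply Rmin_r.
  assert (HE: E (Ts + d')).
  { split; [lra|]. intros u Hu.
    destruct (Rlt_dec u Ts) as [Hlt|Hge]; [apply Hin; lra|].
    assert (HJu: p - eta <= J u).
    { assert (Rabs (u - Ts) < d) by (apply Rabs_def1; lra). pose proof (Hdd u H).
      apply Rabs_def2 in H0. unfold p. lra. }
    assert (HJs: forall s, 0 <= s <= u -> J s <= p + eta).
    { intros s Hs'. destruct (Rle_dec s Ts).
      - unfold p. pose proof (J_mono s Ts ltac:(lra) ltac:(intros; apply Hin; lra)). lra.
      - assert (Rabs (s - Ts) < d) by (apply Rabs_def1; lra). pose proof (Hdd s H).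
        apply Rabs_def2 in H0. unfold p. lra. }
    assert (HK: K u <= (p + eta) * G u) by (apply K_upper; auto; lra).
    assert (HG: G u <= 1 - gam).
    { unfold gam. pose proof (G_mono mu sigma u (Ts + 1) Hs ltac:(lra)). unfold G. lra. }
    pose proof (G_bnd u ltac:(lra)).
    assert ((p + eta) * G u <= (p + eta) * (1 - gam)) by (apply Rmult_le_compat_l; lra).
    assert (HJK: 0 <= J u - K u).
    { assert (p * gam = 4 * eta) by (unfold eta; field).
      nra. }
    assert (HMJ: 0 <= M - J u) by (pose proof (J_le_M u ltac:(lra)); lra).
    unfold F. apply Rmult_le_pos; [apply Rmult_le_pos|]; lra. }
  pose proof (Hub _ HE). lra.
Qed.

Lemma J_mono_all : 0 < I 0 -> forall x y, 0 <= x <= y -> J x <= J y.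
Proof. intros HI x y Hxy. apply J_mono; auto. intros; apply F_nonneg; auto; lra. Qed.

Lemma J_pos : 0 < I 0 -> forall x, 0 <= x -> 0 < J x.
Proof. intros HI x Hx. pose proof (J_mono_all HI 0 x ltac:(lra)). rewrite J_eq in H by lra. lra. Qed.

Lemma K_split_lower A t c0 : 0 <= A <= t -> (forall s, 0 <= s <= A -> 0 <= J s) ->
  (forall s, A <= s <= t -> c0 <= J s) -> c0 * G (t - A) <= K t.
Proof.
  intros HA H0 H1. unfold K. rewrite <- (chasles _ 0 A t) by apply K_ex.
  assert (0 <= RInt (fun s => g (t - s) * J s) 0 A).
  { apply RInt_ge_0. lra. apply K_ex. intros x Hx. apply Rmult_le_pos. apply ln_ge0; auto. apply H0; lra. }
  assert (c0 * G (t - A) <= RInt (fun s => g (t - s) * J s) A t).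
  { assert (E: G (t - A) = RInt (fun s => g (t - s)) A t).
    { rewrite conv_g. unfold G. replace (t - t) with 0 by ring. auto. }
    rewrite E. rewrite <- RInt_sc by apply gts_ex.
    apply RInt_le. lra. apply (ex_RInt_scal (V:=R_NormedModule) (fun x => g (t - x)) A t c0), gts_ex.
    apply K_ex. intros x Hx. rewrite (Rmult_comm c0). apply Rmult_le_compat_l. apply ln_ge0; auto. apply H1; lra. }
  lra.
Qed.

Lemma asympt Linf c : 0 < I 0 -> (forall x, 0 <= x -> J x <= Linf) ->
  (forall e, 0 < e -> exists A, 0 <= A /\ forall x, A <= x -> Linf - e < J x) ->
  (forall x, 0 <= x -> G x <= c) ->
  (forall e, 0 < e -> exists A, 0 <= A /\ forall x, A <= x -> c - e < G x) ->
  0 <= Linf -> Linf <= M ->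
  forall e, 0 < e -> exists T, 0 < T /\ forall t, T <= t ->
    Rabs (M - J t - (M - Linf)) <= e /\ Rabs (J t - K t - Linf * (1 - c)) <= e.
Proof.
  intros HI HJ1 HJ2 HG1 HG2 HL0 HLM e He.
  set (eps := e / (M + 2)).
  assert (Heps: 0 < eps) by (unfold eps; apply Rdiv_lt_0_compat; lra).
  assert (Heps2: eps * (M + 2) = e) by (unfold eps; field; lra).
  destruct (HJ2 eps Heps) as [A1 [HA1 HA1']].
  destruct (HG2 eps Heps) as [A2 [HA2 HA2']].
  exists (A1 + A2 + 1). split; [lra|]. intros t Ht.
  pose proof (HJ1 t ltac:(lra)). pose proof (HA1' t ltac:(lra)).
  assert (HKu: K t <= Linf * c).
  { eapply Rle_trans. apply K_upper. lra. intros; apply HJ1; lra.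
    apply Rmult_le_compat_l; auto. apply HG1; lra. }
  assert (HKl: (Linf - eps) * G (t - A1) <= K t).
  { apply K_split_lower. lra. intros; apply Rlt_le, J_pos; auto; lra.
    intros s Hs'. apply Rlt_le, HA1'; lra. }
  pose proof (HG1 (t - A1) ltac:(lra)). pose proof (HA2' (t - A1) ltac:(lra)).
  pose proof (G_bnd (t - A1) ltac:(lra)).
  assert (Linf * (c - eps) <= Linf * G (t - A1)) by (apply Rmult_le_compat_l; lra).
  assert (eps * G (t - A1) <= eps) by (rewrite <- (Rmult_1_r eps) at 2; apply Rmult_le_compat_l; lra).
  assert (HKl2: Linf * c - eps * (Linf + 1) <= K t).
  { replace ((Linf - eps) * G (t - A1)) with (Linf * G (t - A1) - eps * G (t - A1)) in HKl by ring.
    replace (Linf * (c - eps)) with (Linf * c - eps * Linf) in H4 by ring. lra. }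
  assert (eps * (Linf + 1) <= eps * (M + 1)) by (apply Rmult_le_compat_l; lra).
  split.
  - replace (M - J t - (M - Linf)) with (Linf - J t) by ring. rewrite Rabs_pos_eq by lra.
    assert (eps <= e) by (rewrite <- Heps2; nra). lra.
  - apply Rabs_le. replace (Linf * (1 - c)) with (Linf - Linf * c) by ring. split; nra.
Qed.

Lemma final : is_lim (Derive I) p_infty 0.
Proof.
  assert (DF: forall t, 0 < t -> Derive I t = F t).
  { intros t Ht. rewrite <- rhs_eq by auto. apply is_derive_unique. apply Hd; auto. }
  assert (Suff: exists L0, L0 = 0 /\ forall d, 0 < d -> exists T, 0 < T /\ forall t, T <= t -> Rabs (F t - L0) <= d).
  { destruct (Req_dec (I 0) 0) as [HI|HI].
    - exists 0. split; auto. intros d Hd0. exists 1. split; [lra|]. intros t Ht.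
      unfold F. rewrite (zero_case HI t) by lra.
      assert (Rabs (K t) <= 0) by (apply K_abs; [lra|intros s Hs1; rewrite (zero_case HI s) by lra; rewrite Rabs_R0; lra]).
      pose proof (Rabs_pos (K t)). assert (K t = 0) by (apply Rabs_eq_0; lra). rewrite H1.
      replace (beta * (M - 0) * (0 - 0) - 0) with 0 by ring. rewrite Rabs_R0. lra.
    - assert (HI': 0 < I 0) by lra.
      destruct (mono_lim J M (J_mono_all HI') (fun x Hx => J_le_M x Hx)) as [Linf [HL1 HL2]].
      destruct (mono_lim G 1) as [c [Hc1 Hc2]].
      { intros x y Hxy. apply G_mono; auto; lra. }
      { intros x Hx. apply G_bnd; auto. }
      assert (HLp: 0 < Linf) by (pose proof (J_pos HI' 0 ltac:(lra)); pose proof (HL1 0 ltac:(lra)); lra).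
      assert (HLM: Linf <= M).
      { destruct (Rle_dec Linf M) as [|Hn]; auto. exfalso.
        destruct (HL2 (Linf - M) ltac:(lra)) as [A [HA HA']]. pose proof (HA' A ltac:(lra)).
        pose proof (J_le_M A HA). lra. }
      assert (Hc0': 0 <= c) by (pose proof (Hc1 0 ltac:(lra)); pose proof (G_bnd 0 ltac:(lra)); lra).
      assert (Hc1': c <= 1).
      { destruct (Rle_dec c 1) as [|Hn]; auto. exfalso.
        destruct (Hc2 (c - 1) ltac:(lra)) as [A [HA HA']]. pose proof (HA' A ltac:(lra)).
        pose proof (G_bnd A HA). lra. }
      set (a := M - Linf). set (bb := Linf * (1 - c)).
      assert (Ha: 0 <= a) by (unfold a; lra).
      assert (Hbb: 0 <= bb) by (unfold bb; apply Rmult_le_pos; lra).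
      set (L0 := beta * (a * bb)).
      assert (Conv: forall d, 0 < d -> exists T, 0 < T /\ forall t, T <= t -> Rabs (F t - L0) <= d).
      { intros d Hd0.
        set (k := beta * (a + bb + 1)). assert (Hk: 0 < k) by (unfold k; apply Rmult_lt_0_compat; lra).
        set (e := Rmin 1 (d / k)).
        assert (He1: e <= 1) by apply Rmin_l. assert (He2: e <= d / k) by apply Rmin_r.
        assert (He0: 0 < e) by (apply Rmin_glb_lt; [lra|apply Rdiv_lt_0_compat; lra]).
        destruct (asympt Linf c HI' HL1 HL2 Hc1 Hc2 ltac:(lra) HLM e He0) as [T [HT HT']].
        exists T. split; auto. intros t Ht. destruct (HT' t Ht) as [H1 H2].
        pose proof (prod_close a bb (M - J t) (J t - K t) e ltac:(lra) H1 H2) as P.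
        rewrite (Rabs_pos_eq a), (Rabs_pos_eq bb) in P by lra.
        unfold F, L0. replace (beta * (M - J t) * (J t - K t) - beta * (a * bb))
          with (beta * ((M - J t) * (J t - K t) - a * bb)) by ring.
        rewrite Rabs_mult, (Rabs_pos_eq beta) by lra.
        assert (e * k <= d) by (apply (Rmult_le_compat_r k) in He2; [|lra]; unfold Rdiv in He2;
          rewrite Rmult_assoc, Rinv_l, Rmult_1_r in He2 by lra; lra).
        unfold k in *. 
        apply Rle_trans with (beta * (e * (a + bb + 1))). apply Rmult_le_compat_l; lra.
        lra. }
      exists L0. split; auto.
      destruct (Rle_dec L0 0) as [HL|HL].
      + assert (0 <= L0) by (unfold L0; apply Rmult_le_pos; [lra|apply Rmult_le_pos; lra]). lra.
      + exfalso. destruct (Conv (L0/2) ltac:(lra)) as [T [HT HT']].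
        set (s := 2 * M / L0 + 1).
        assert (Hs0: 0 < s) by (unfold s; assert (0 < 2 * M / L0) by (apply Rdiv_lt_0_compat; lra); lra).
        destruct (mvt_open J F T (T + s) ltac:(lra)) as [xi [Hxi E]].
        * intros; apply dJ; lra.
        * intros; apply J_cont.
        * pose proof (HT' xi ltac:(lra)). pose proof (Rle_abs (-(F xi - L0))) as H9. rewrite Rabs_Ropp in H9.
          pose proof (J_le_M (T + s) ltac:(lra)). pose proof (J_pos HI' T ltac:(lra)).
          assert (L0 / 2 * s <= F xi * s) by (apply Rmult_le_compat_r; lra).
          assert (L0 / 2 * s = M + L0 / 2) by (unfold s; field; lra).
          lra. }
  destruct Suff as [L0 [HL0 Hconv]]. subst L0.
  apply is_lim_spec. intros eps. simpl.
  destruct (Hconv (eps / 2)) as [T [HT HT']]. { pose proof (cond_pos eps). lra. }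
  exists T. intros t Ht. rewrite DF by lra. pose proof (HT' t ltac:(lra)). rewrite Rminus_0_r in *.
  pose proof (cond_pos eps). lra.
Qed.

End Main.


Theorem proposition3p8 (M beta mu sigma I0 : R) (I : R -> R) :
  0 < M -> 0 < beta -> 0 < sigma ->
  0 <= I0 <= M ->
  I 0 = I0 ->
  (* I is continuous on [0, oo) (right-continuous at 0) *)
  filterlim I (at_right 0) (locally (I 0)) ->
  (* the equation holds on (0, oo) (with continuity, this makes I a C^1 solution on [0, oo)) *)
  (forall t, 0 < t -> is_derive I t (rhs beta M mu sigma I t)) ->
  is_lim (Derive I) p_infty 0.
Proof.
  intros HM Hb Hs HI0 HI Hc Hd. subst I0.
  apply (final M beta mu sigma I); auto.
Qed.
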